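(* Let $L\ge1$ and $a_1,\dots,a_{2L}\ge0$ be integers, and let $\beta=x_1^{a_1}x_2^{a_2}\cdots x_1^{a_{2L-1}}x_2^{a_{2L}}\in\mathcal{B}_3$, with $D=\sum_{i=1}^{2L}a_i$ and $Z=\#\{i:1\le i\le 2L,\ a_i=0\}$. Then $\deg V_3(\beta)\le 3D-2L+2Z$.
   Context: $\mathcal{B}_3$ is the 3-strand braid group with Artin generators $x_1,x_2$; $V_3(\beta)$ is the Jones polynomial of the closure of $\beta$, normalized by $V(\text{unknot})=1$ and $q^{-1}V_{L_+}-qV_{L_-}=(q^{1/2}-q^{-1/2})V_{L_0}$, written as a Laurent polynomial in $s=q^{-1/2}$; $\deg$ is the highest exponent of $s$. Conventions: closures of $\alpha x_i^{e+2}\gamma$, $\alpha x_i^{e+1}\gamma$, $\alpha x_i^{e}\gamma$ play the roles of $L_-,L_0,L_+$ (e.g. the closure of $x_1^2\in\mathcal B_2$ has Jones polynomial $-s-s^5$). *)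

(* Defs.v *)
(* Jones polynomial of closures of 3-braids via the
   Kauffman bracket state sum, computed in the Temperley-Lieb algebra TL_3. *)
From mathcomp Require Import all_boot all_algebra.
Set Implicit Arguments. Unset Strict Implicit. Unset Printing Implicit Defensive.
Import GRing.Theory Num.Theory.
Local Open Scope ring_scope.

(* A braid generator: [false] = x_1, [true] = x_2 (positive Artin generators).
   A braid word is a [seq bool], read left to right. *)

Inductive tl3 := TI | TE1 | TE2 | TE12 | TE21.

(* Right multiplication of a basis diagram by e_g: returns the resulting
   basis diagram and the number of closed loops created (each loop = delta). *)
Definition tl3_mul_e (d : tl3) (g : bool) : tl3 * nat :=
  match g, d with
  | false, TI => (TE1, 0%N)   | false, TE1 => (TE1, 1%N)
  | false, TE2 => (TE21, 0%N) | false, TE12 => (TE1, 0%N)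
  | false, TE21 => (TE21, 1%N)
  | true, TI => (TE2, 0%N)    | true, TE1 => (TE12, 0%N)
  | true, TE2 => (TE2, 1%N)   | true, TE12 => (TE12, 1%N)
  | true, TE21 => (TE2, 0%N)
  end.

Definition closure_loops (d : tl3) : nat :=
  match d with TI => 3 | TE1 | TE2 => 2 | TE12 | TE21 => 1 end.

(* Kauffman states: each crossing x_i = A * 1 + A^-1 * e_i.  For every state,
   record (b, k) = (number of e-smoothings, total number of loops of the
   smoothed closed diagram). *)
Fixpoint state_data (w : seq bool) (d : tl3) (b l : nat) : seq (nat * nat) :=
  match w with
  | [::] => [:: (b, l + closure_loops d)%N]
  | g :: w' =>
      state_data w' d b l ++
      (let: (d', c) := tl3_mul_e d g in state_data w' d' b.+1 (l + c)%N)
  end.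

(* With A = s^(-1/2) (s = q^(-1/2)), delta = -A^2 - A^-2 = -(s + s^-1), writhe
   = size w, and V = (-A^3)^(-w) <D>, a state (b,k) contributes
     (-1)^D s^(D+b) (-(s + s^-1))^(k-1),   D = size w.
   We store V(s) as s^(-jones_shift w) * jones_poly w, jones_poly w : {poly int}. *)
Definition jones_shift (w : seq bool) : nat := (size w + 2)%N.

Definition state_term (w : seq bool) (bk : nat * nat) : {poly int} :=
  let D := size w in
  (-1) ^+ (D + bk.2.-1) * 'X^(D + bk.1 + (jones_shift w - bk.2.-1))
    * (1 + 'X^2) ^+ (bk.2.-1).

Definition jones_poly (w : seq bool) : {poly int} :=
  \sum_(bk <- state_data w TI 0 0) state_term w bk.

Definition jones_coef (w : seq bool) (n : int) : int :=
  match (n + (jones_shift w)%:Z)%R with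
  | Posz m => (jones_poly w)`_m
  | Negz _ => 0
  end.

Definition jones_deg_le (w : seq bool) (N : int) : Prop :=
  forall n : int, jones_coef w n != 0 -> n <= N.

(* The braid x_1^(a_1) x_2^(a_2) x_1^(a_3) ... (0-based index i: even -> x_1). *)
Definition braid_word (a : seq nat) : seq bool :=
  flatten [seq nseq (nth 0%N a i) (odd i) | i <- iota 0 (size a)].

(* Main.v *)
Require Import Defs.
From mathcomp Require Import all_boot all_algebra zify.
Set Implicit Arguments. Unset Strict Implicit. Unset Printing Implicit Defensive.

Fixpoint reach (x : seq bool) (d : tl3) (b l : nat) (d' : tl3) (b' l' : nat) : Prop :=
  match x with
  | [::] => d = d' /\ b = b' /\ l = l'
  | g :: x' => reach x' d b l d' b' l' \/
      reach x' (tl3_mul_e d g).1 b.+1 (l + (tl3_mul_e d g).2) d' b' l'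
  end.

Lemma state_data_cat x w d b l p :
  p \in state_data (x ++ w) d b l ->
  exists d' b' l', reach x d b l d' b' l' /\ p \in state_data w d' b' l'.
Proof.
elim: x d b l => [|g x IH] d b l /=.
  by move=> H; exists d, b, l.
rewrite mem_cat; case/orP.
  by move/IH => [d' [b' [l' [H1 H2]]]]; exists d', b', l'; split => //; left.
case: (tl3_mul_e d g) => d2 c /=.
by move/IH => [d' [b' [l' [H1 H2]]]]; exists d', b', l'; split => //; right.
Qed.

Definition absorbing (g : bool) (d : tl3) : bool :=
  match g, d with
  | false, TE1 | false, TE21 | true, TE2 | true, TE12 => true
  | _, _ => false end.

Lemma block_abs g n d b l d' b' l' : absorbing g d ->
  reach (nseq n g) d b l d' b' l' -> d' = d /\ (b' + l' <= b + l + 2 * n)%N.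
Proof.
move=> Ha; have E : tl3_mul_e d g = (d, 1%N) by case: g d Ha => [] [].
elim: n b l => [|n IH] b l /=.
  by case=> -> [-> ->]; split => //; lia.
rewrite E /=; case=> /IH [-> H]; split => //; lia.
Qed.

Lemma block g n d b l d' b' l' :
  reach (nseq n g) d b l d' b' l' ->
  (d' = d /\ (b' + l' <= b + l + (if absorbing g d then 2 * n else 0))%N) \/
  (0 < n /\ d' = (tl3_mul_e d g).1 /\ (b' + l' <= b + l + 2 * n - 1))%N.
Proof.
case Ha: (absorbing g d).
  by move/(block_abs Ha) => [-> H]; left.
have [E Ha2] : (tl3_mul_e d g).2 = 0%N /\ absorbing g (tl3_mul_e d g).1.
  by case: g d Ha => [] [].
elim: n b l => [|n IH] b l /=.
  by case=> -> [-> ->]; left; split => //; lia.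
case.
  move/IH => [[-> H]|[H1 [H2 H3]]]; first by left; split => //; lia.
  by right; split => //; split => //; lia.
move/(block_abs Ha2) => [-> H]; right; split => //; split => //.
rewrite E in H; lia.
Qed.

Lemma state_data_bnd w d b l (x y : nat) : (x, y) \in state_data w d b l ->
  (y + b <= x + l + 3 /\ x <= b + size w /\ 1 <= y)%N.
Proof.
elim: w d b l => [|g w IH] d b l /=.
  by rewrite inE => /eqP [-> ->]; case: d => /=; lia.
rewrite mem_cat; case/orP; first by move/IH; lia.
have : ((tl3_mul_e d g).2 <= 1)%N by case: g; case: d.
case: (tl3_mul_e d g) => d2 c /= Hc; move/IH; lia.
Qed.

Definition bud (n : nat) : nat := if n is m.+1 then (2 * m + 1)%N else 1%N.
Definition Q0 (d : tl3) : nat :=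
  match d with TI => 2 | TE1 => 1 | TE2 => 1 | TE12 => 0 | TE21 => 2 end.

Lemma braid_word_cons2 x y r :
  braid_word [:: x, y & r] = nseq x false ++ nseq y true ++ braid_word r.
Proof.
rewrite /braid_word /=.
have -> : iota 2 (size r) = [seq 2 + i | i <- iota 0 (size r)] by rewrite -iotaDl.
rewrite -map_comp; congr (_ ++ (_ ++ flatten _)); apply: eq_map => i /=.
by rewrite add0n negbK.
Qed.

Lemma bud_spec n : (bud n = 2 * n - 1 /\ 0 < n)%N \/ (bud n = 1 /\ n = 0)%N.
Proof. case: n => [|n] /=; [right | left]; lia. Qed.

Lemma pair_step a1 a2 w d b l x y :
  (x, y) \in state_data (nseq a1 false ++ nseq a2 true ++ w) d b l ->
  exists d2 b2 l2, (x, y) \in state_data w d2 b2 l2 /\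
    (b2 + l2 + Q0 d2 <= b + l + Q0 d + bud a1 + bud a2)%N /\
    (d = TI -> b = 0 -> l = 0 -> b2 + l2 + Q0 d2 <= bud a1 + bud a2)%N.
Proof.
move/state_data_cat => [d1 [b1 [l1 [R1]]]] /state_data_cat [d2 [b2 [l2 [R2 Hin]]]].
exists d2, b2, l2; split => //.
case: (bud_spec a1) => [[E1 P1]|[E1 P1]]; case: (bud_spec a2) => [[E2 P2]|[E2 P2]];
move: R1 R2 => /block [[-> H1]|[Q1 [-> H1]]] /block [[-> H2]|[Q2 [-> H2]]];
case: d H1 H2 => /= H1 H2; (split; [lia | move=> Hd Hb Hl; try discriminate; subst; lia]).
Qed.

Lemma main n : forall r, size r = (2 * n)%N -> forall d b l x y,
  (x, y) \in state_data (braid_word r) d b l ->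
  (x + y <= b + l + Q0 d + \sum_(z <- r) bud z + 1)%N.
Proof.
elim: n => [|n IH] [|a1 [|a2 r]] Hs d b l x y; try (simpl in Hs; lia).
- rewrite big_nil /braid_word /= inE => /eqP [-> ->]; case: d => /=; lia.
- rewrite braid_word_cons2 => /pair_step [d2 [b2 [l2 [Hin [H _]]]]].
  simpl in Hs; have := IH r ltac:(lia) _ _ _ _ _ Hin; rewrite !big_cons; lia.
Qed.

Lemma comb L a x y : (1 <= L)%N -> size a = (2 * L)%N ->
  (x, y) \in state_data (braid_word a) TI 0 0 ->
  (x + y <= \sum_(z <- a) bud z + 1)%N.
Proof.
case: a => [|a1 [|a2 r]] HL Hs; try (simpl in Hs; lia). rewrite braid_word_cons2 => /pair_step [d2 [b2 [l2 [Hin [_ H]]]]].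
simpl in Hs; have := main (n := L.-1) (r := r) ltac:(lia) Hin.
have := H erefl erefl erefl; rewrite !big_cons; lia.
Qed.

Lemma bud_sum a : (\sum_(z <- a) bud z + size a = 2 * \sum_(z <- a) z + 2 * count (fun z => z == 0%N) a)%N.
Proof.
elim: a => [|z a IH]; first by rewrite !big_nil.
rewrite !big_cons /=; move: (\sum_(j <- a) bud j) (\sum_(j <- a) j) (count _ a) IH => s1 s2 s3 IH; case: z => [|z] /=; lia.
Qed.

Lemma size_bw n : forall r, size r = (2 * n)%N ->
  size (braid_word r) = \sum_(z <- r) z.
Proof.
elim: n => [|n IH] [|a1 [|a2 r]] Hs; try (simpl in Hs; lia).
- by rewrite big_nil.
- simpl in Hs; rewrite braid_word_cons2 !size_cat !size_nseq (IH r) ?big_cons; lia.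
Qed.

Import GRing.Theory Num.Theory.
Local Open Scope ring_scope.
Lemma term_size (w : seq bool) (x y : nat) :
  (y.-1 <= size w + 2)%N ->
  (size (state_term w (x, y)) <= 2 * size w + 3 + x + y.-1)%N.
Proof.
move=> Hy; rewrite /state_term /jones_shift /=.
set e := (size w + y.-1)%N; set k := (size w + x + (size w + 2 - y.-1))%N.
set j := y.-1.
have h1 : (size ((-1 : {poly int}) ^+ e)%R <= 1)%N.
  apply: leq_trans (size_poly_exp_leq _ _) _.
  by rewrite size_polyN size_poly1.
have h2 : (size (1 + 'X^2 : {poly int})%R <= 3)%N.
  apply: leq_trans (size_polyD _ _) _; rewrite size_poly1 size_polyXn //.
have h3 : (size ((1 + 'X^2 : {poly int}) ^+ j)%R <= 2 * j + 1)%N.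
  apply: leq_trans (size_poly_exp_leq _ _) _; nia.
have h4 := size_polyXn int k.
have h5 := size_polyMleq ((-1 : {poly int}) ^+ e) 'X^k.
have h6 := size_polyMleq ((-1 : {poly int}) ^+ e * 'X^k) ((1 + 'X^2) ^+ j).
have hk : k = (size w + x + (size w + 2 - j))%N by []. have Hj : (j <= size w + 2)%N by []. clearbody e k j. move: h1 h2 h3 h4 h5 h6. set P := ((-1) ^+ e : {poly int}). set X := ((1 + 'X^2)^+j : {poly int}). set Y := ('X^k : {poly int}). move: (size (P * Y)) (size (P*Y*X)) (size P) (size Y) (size X) => s1 s2 s3 s4 s5. lia.
Qed.

Theorem theorem4p11 (L : nat) (a : seq nat) :
  (1 <= L)%N -> size a = (2 * L)%N ->
  jones_deg_le (braid_word a)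
    (3 * (\sum_(x <- a) x)%N%:Z - 2 * L%:Z + 2 * (count (fun x => x == 0%N) a)%:Z).
Proof.
move=> HL Hs n; rewrite /jones_coef.
case E: (n + (jones_shift (braid_word a))%:Z) => [m|]; last by rewrite eqxx.
move=> Hc; case Hn: (_ <= _) => //.
suff Hz : (jones_poly (braid_word a))`_m = 0 by rewrite Hz eqxx in Hc.
rewrite /jones_poly coef_sum big1_seq // => p; rewrite [p]surjective_pairing /=; move: (p.1 : nat) (p.2 : nat) => x y Hin.
apply: nth_default.
have h1 := comb HL Hs Hin.
have h2 := state_data_bnd Hin.
have h3 := bud_sum a.
have h4 := size_bw (n := L) Hs.
have h5 := @term_size (braid_word a) x y.
move: E Hn h1 h2 h3 h4 h5; rewrite /jones_shift.
move: (size (braid_word a)) (\sum_(z <- a) bud z) (\sum_(x <- a) x)%N (count _ a) => sw B S Z.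
move: (size (state_term _ _)) => st.
lia.
Qed.
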